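(* Let $\mathcal{K}$ be a commutative ring and $\mathcal{A}$ a (possibly noncommutative) $\mathcal{K}$-ring, regarded as an $\mathcal{A}$-bimodule over itself. If $\Delta_1$ is an $n$-order and $\Delta_2$ an $m$-order $\mathcal{A}$-valued left differential operator on $\mathcal{A}$ (in the sense defined in the context), then the composition $\Delta_1\circ\Delta_2$ is an $(n+m)$-order $\mathcal{A}$-valued left differential operator on $\mathcal{A}$.
   Context: A $\mathcal{K}$-ring is a unital associative $\mathcal{K}$-algebra with $1\neq0$. $\mathrm{Hom}_{\mathcal{K}}(\mathcal{A},\mathcal{A})$ is an $\mathcal{A}$-bimodule via $(a\Phi)(x)=a\Phi(x)$ and $(\Phi\bullet a)(x)=\Phi(ax)$; put $\delta_a\Phi:=a\Phi-\Phi\bullet a$. For such a bimodule $M$ its center is $\{x\in M: ax=x\bullet a\ \forall a\in\mathcal{A}\}$. Define $\mathcal{Z}_0$ = center of $\mathrm{Hom}_{\mathcal{K}}(\mathcal{A},\mathcal{A})$, $\mathcal{I}_0$ = sub-bimodule generated by $\mathcal{Z}_0$; inductively for $r\ge1$, $\mathcal{Z}_r$ = center of the quotient bimodule $\mathrm{Hom}_{\mathcal{K}}(\mathcal{A},\mathcal{A})/\mathcal{I}_{r-1}$, $\overline{\mathcal{Z}}_r$ = sub-bimodule generated by $\mathcal{Z}_r$, and $\mathcal{I}_r$ the sub-bimodule with $\mathcal{I}_r/\mathcal{I}_{r-1}=\overline{\mathcal{Z}}_r$. An $r$-order $\mathcal{A}$-valued (left) differential operator on $\mathcal{A}$ is an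 element of $\mathcal{I}_r$ (Lunts–Rosenberg). *)

(* Defs.v *)
From mathcomp Require Import all_boot all_algebra.
Set Implicit Arguments. Unset Strict Implicit. Unset Printing Implicit Defensive.
Import GRing.Theory.
Local Open Scope ring_scope.

(* Hom_K(A,A) is represented by the
   predicate [klinear] on functions A -> A; subsets of Hom_K(A,A) are
   predicates (A -> A) -> Prop. *)
Section LR.
Variables (K : comPzRingType) (A : algType K).

Definition klinear (f : A -> A) : Prop :=
  forall (k : K) (x y : A), f (k *: x + y) = k *: f x + f y.

Definition lact (a : A) (f : A -> A) : A -> A := fun x => a * f x.
Definition ract (f : A -> A) (a : A) : A -> A := fun x => f (a * x).
Definition delta (a : A) (f : A -> A) : A -> A := fun x => a * f x - f (a * x).

(* sub-A-bimodule of Hom_K(A,A) generated by a subset S of Hom_K(A,A):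
   smallest subset containing S, 0, and closed under +, left and right
   actions (closure under negation follows from left action by -1). *)
Inductive gen (S : (A -> A) -> Prop) : (A -> A) -> Prop :=
| gen_in f : S f -> gen S f
| gen0 : gen S (fun _ => 0)
| genD f g : gen S f -> gen S g -> gen S (fun x => f x + g x)
| genL a f : gen S f -> gen S (lact a f)
| genR a f : gen S f -> gen S (ract f a).

Definition Z0 (f : A -> A) : Prop :=
  klinear f /\ forall a : A, lact a f = ract f a.

(* I_0 = gen Z_0 ; I_{r+1} = preimage in Hom of the sub-bimodule of
   Hom/I_r generated by the center Z_{r+1} of Hom/I_r, i.e. the sub-bimodule
   generated by I_r together with all f in Hom with a f - f.a in I_r for all a. *)
Fixpoint diffop (r : nat) : (A -> A) -> Prop :=
  match r with
  | 0 => gen Z0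
  | r'.+1 => gen (fun f => diffop r' f \/
                   (klinear f /\ forall a : A, diffop r' (delta a f)))
  end.
End LR.

(* Main.v *)
Require Import Defs.
From mathcomp Require Import all_boot all_algebra.
From Stdlib Require Import FunctionalExtensionality.
Set Implicit Arguments. Unset Strict Implicit. Unset Printing Implicit Defensive.
Import GRing.Theory.
Local Open Scope ring_scope.

Section P.
Variables (K : comPzRingType) (A : algType K).

Definition Sm (m : nat) : (A -> A) -> Prop :=
  match m with
  | 0 => @Z0 K A
  | r'.+1 => (fun f => diffop r' f \/
                   (klinear f /\ forall a : A, diffop r' (delta a f)))
  end.

Lemma diffopE m : @diffop K A m = gen (Sm m).
Proof. by case: m. Qed.

Lemma diffop_S r (f : A -> A) : diffop r f -> diffop r.+1 f.
Proof. by move=> h; apply: gen_in; left. Qed.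

Lemma diffop_le r k (f : A -> A) : diffop r f -> diffop (r + k) f.
Proof.
elim: k => [|k IH] h; first by rewrite addn0.
by rewrite addnS; apply: diffop_S; apply: IH.
Qed.

Lemma genN S (f : A -> A) : gen S f -> gen S (fun x => - f x).
Proof.
move=> h; have := genL (-1) h.
have -> : lact (-1) f = (fun x => - f x).
  by apply: functional_extensionality => x; rewrite /lact mulN1r.
by [].
Qed.

Lemma genB S (f g : A -> A) : gen S f -> gen S g -> gen S (fun x => f x - g x).
Proof. by move=> hf hg; apply: (genD hf (genN hg)). Qed.

Lemma klinD (f : A -> A) : klinear f -> forall x y, f (x + y) = f x + f y.
Proof. by move=> h x y; have := h 1 x y; rewrite !scale1r. Qed.

Lemma klin0 (f : A -> A) : klinear f -> f 0 = 0.
Proof.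
move=> h; have := klinD h 0 0; rewrite addr0 => e.
by apply: (@addrI _ (f 0)); rewrite addr0 -e.
Qed.

Lemma klinN (f : A -> A) : klinear f -> forall x, f (- x) = - f x.
Proof.
by move=> h x; have := h (-1) x 0; rewrite (klin0 h) !addr0 !scaleN1r.
Qed.

Lemma gen_klin S (f : A -> A) : (forall g, S g -> klinear g) -> gen S f -> klinear f.
Proof.
move=> hS; elim => {f}.
- by move=> f /hS.
- by move=> k x y; rewrite scaler0 addr0.
- by move=> f g _ hf _ hg k x y; rewrite hf hg scalerDr addrACA.
- by move=> a f _ hf k x y; rewrite /lact hf mulrDr -scalerAr.
- by move=> a f _ hf k x y; rewrite /ract mulrDr -scalerAr hf.
Qed.

Lemma diffop_klin r (f : A -> A) : diffop r f -> klinear f.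
Proof.
elim: r f => [|r IH] f.
  by apply: gen_klin => g [].
apply: gen_klin => g [/IH //|[]//].
Qed.

Lemma klin_comp (f g : A -> A) : klinear f -> klinear g -> klinear (f \o g).
Proof. by move=> hf hg k x y; rewrite /= hg hf. Qed.

Lemma closure (G : A -> A) (P : (A -> A) -> Prop) m :
  klinear G ->
  (forall f g, P f -> P g -> P (fun x => f x + g x)) ->
  P (fun _ => 0) ->
  (forall a f, P f -> P (ract f a)) ->
  (forall a f, diffop m f -> P (G \o f) -> P (G \o lact a f)) ->
  (forall H, Sm m H -> P (G \o H)) ->
  forall D, diffop m D -> P (G \o D).
Proof.
move=> hG hD h0 hR hL hS D; rewrite diffopE => hgen.
elim: hgen.
- by move=> f /hS.
- have -> : G \o (fun _ : A => 0) = (fun _ => 0).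
    by apply: functional_extensionality => x /=; rewrite klin0.
  exact: h0.
- move=> f g _ hf _ hg.
  have -> : G \o (fun x => f x + g x) = (fun x => (G \o f) x + (G \o g) x).
    by apply: functional_extensionality => x /=; rewrite klinD.
  exact: hD.
- by move=> a f hf IH; apply: hL => //; rewrite diffopE.
- by move=> a f _ IH; exact: (hR a _ IH).
Qed.

Lemma Z0_comm (G : A -> A) : Z0 G -> forall a x, a * G x = G (a * x).
Proof.
by move=> [_ h] a x; have := congr1 (fun F => F x) (h a).
Qed.

Lemma L0 (G : A -> A) : Z0 G -> forall m D, diffop m D -> diffop m (G \o D).
Proof.
move=> hZ; have hG : klinear G by case: hZ.
have hc := Z0_comm hZ.
elim=> [|m IH] D.
- apply: (closure (P := diffop 0)) => //.
  + by move=> f g; apply: genD.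
  + exact: gen0.
  + by move=> a f; apply: genR.
  + move=> a f _ h.
    have -> : G \o lact a f = lact a (G \o f).
      by apply: functional_extensionality => x /=; rewrite /lact hc.
    exact: genL.
  + move=> H hH; apply: gen_in; split.
      by apply: klin_comp => //; case: hH.
    move=> a; apply: functional_extensionality => x.
    by rewrite /lact /ract /= hc (Z0_comm hH).
- apply: (closure (P := diffop m.+1)) => //.
  + by move=> f g; apply: genD.
  + exact: gen0.
  + by move=> a f; apply: genR.
  + move=> a f _ h.
    have -> : G \o lact a f = lact a (G \o f).
      by apply: functional_extensionality => x /=; rewrite /lact hc.
    exact: genL.
  + move=> H [hH|[hH hd]].
      by apply: diffop_S; apply: IH.
    apply: gen_in; right; split; first exact: klin_comp.
    move=> a.
    have -> : delta a (G \o H) = G \o delta a H.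
      apply: functional_extensionality => x; by rewrite /delta /= (klinD hG) (klinN hG) hc.
    exact: IH.
Qed.

Definition T n (G : A -> A) := forall m D, diffop m D -> diffop (n + m) (G \o D).

Lemma T_gen n S (G : A -> A) : (forall H, S H -> T n H) -> gen S G -> T n G.
Proof.
move=> hS; elim => {G}.
- by move=> f /hS.
- by move=> m D _; rewrite diffopE; exact: gen0.
- move=> f g _ hf _ hg m D hD; have := hf m D hD; have := hg m D hD.
  rewrite !diffopE => h1 h2; exact: (genD h2 h1).
- move=> a f _ hf m D hD; have := hf m D hD; rewrite !diffopE => h.
  exact: (genL a h).
- move=> a f _ hf m D hD.
  have hL : diffop m (lact a D) by move: hD; rewrite !diffopE; apply: genL.
  exact: (hf m _ hL).
Qed.

Lemma Lgen n' (G : A -> A) : klinear G ->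
  (forall a, T n' (delta a G)) -> T n'.+1 G.
Proof.
move=> hG hdG; elim=> [|m IH] D.
- rewrite addn0; apply: (closure (P := diffop n'.+1)) => //.
  + by move=> f g; apply: genD.
  + exact: gen0.
  + by move=> a f; apply: genR.
  + move=> a f hf h.
    have -> : G \o lact a f = (fun x => lact a (G \o f) x - (delta a G \o f) x).
      by apply: functional_extensionality => x; rewrite /lact /delta /= opprB addrC subrK.
    apply: genB; first exact: genL.
    have := hdG a 0 f hf; rewrite addn0 => h'; exact: diffop_S h'.
  + move=> H hH; apply: gen_in; right; split.
      by apply: klin_comp => //; case: hH.
    move=> a.
    have -> : delta a (G \o H) = delta a G \o H.
      by apply: functional_extensionality => x; rewrite /delta /= (Z0_comm hH).
    have := hdG a 0 H (gen_in hH); by rewrite addn0.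
- rewrite addnS; apply: (closure (P := diffop (n'.+1 + m).+1)) => //.
  + by move=> f g; apply: genD.
  + exact: gen0.
  + by move=> a f; apply: genR.
  + move=> a f hf h.
    have -> : G \o lact a f = (fun x => lact a (G \o f) x - (delta a G \o f) x).
      by apply: functional_extensionality => x; rewrite /lact /delta /= opprB addrC subrK.
    apply: genB; first exact: genL.
    have := hdG a _ f hf; rewrite addnS -addSn => h'; exact: diffop_S h'.
  + move=> H [hH|[hH hd]].
      by apply: diffop_S; apply: IH.
    apply: gen_in; right; split; first exact: klin_comp.
    move=> a.
    have -> : delta a (G \o H) = (fun x => (delta a G \o H) x + (G \o delta a H) x).
      apply: functional_extensionality => x; rewrite /delta /= (klinD hG) (klinN hG).
      by rewrite addrA subrK.
    have hH' : diffop m.+1 H by apply: gen_in; right.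
    have := hdG a _ H hH'; rewrite addnS -addSn => h1.
    have := IH _ (hd a); rewrite diffopE => h2.
    move: h1; rewrite diffopE => h1; exact: (genD h1 h2).
Qed.

Lemma main n (G : A -> A) : diffop n G -> T n G.
Proof.
elim: n G => [|n IH] G.
- apply: T_gen => H hH m D hD; rewrite add0n; exact: L0.
- apply: T_gen => H [hH|[hH hd]].
    move=> m D hD; rewrite addSn; apply: diffop_S; exact: IH.
  apply: Lgen; first exact: hH.
  by move=> a; apply: IH; apply: hd.
Qed.
End P.

Theorem proposition9 (K : comPzRingType) (A : algType K) (n m : nat)
  (D1 D2 : A -> A) :
  diffop n D1 -> diffop m D2 -> diffop (n + m) (D1 \o D2).
Proof. by move=> h1 h2; exact: main h1 m D2 h2. Qed.
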